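(* Let $\Gamma((r^S)_{S\subseteq I})$ be a quitting game satisfying $r^i_i=0$ for all $i\in I$. If all players are abnormal (i.e. $I_*=\emptyset$), then for every $\varepsilon>0$ the game has a stationary $\varepsilon$-equilibrium.
   Context: A quitting game $\Gamma((r^S)_{S\subseteq I})$: finite player set $I=[N]$, vectors $r^S\in[-1,1]^N$ for all $S\subseteq I$; at each stage $t\in\mathbb N$ each player chooses to continue or quit; with $t^*$ the first stage at which some player quits and $S^*$ the set of players quitting then ($S^*=\emptyset$ if nobody ever quits), the payoff is $r^{S^*}$. Write $r^i:=r^{\{i\}}$. A (behavior) strategy of player $i$ is a sequence $x_i=(x_i^t)_{t\in\mathbb N}\subset[0,1]$, $x_i^t$ being the probability of quitting at stage $t$ if nobody quit before; it is stationary if $x_i^t$ does not depend on $t$. $\gamma(x):=\mathbb E_x[r^{S^*}]$. A profile $x$ is an $\varepsilon$-equilibrium if $\gamma_i(x)\ge\gamma_i(x_i',x_{-i})-\varepsilon$ for all $i$ and all strategies $x_i'$. Normal players: $I_0:=I$, $I_{l+1}:=\{i\in I_l:\ \exists j\in I_l,\ j\neq i,\ r^j_i\le0\}$, and $I_*:=\bigcap_{l}I_l$. Players in $I_*$ are normal, the others abnormal. *)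

(* Defs.v *)
From Stdlib Require Import Reals Lra Lia List Arith.
Import ListNotations.
Open Scope R_scope.

(* Players are 0, ..., N-1.  A subset S of players is a list of booleans of
   length N; player i belongs to S iff nth i S false = true. *)
Definition mem (S : list bool) (i : nat) : bool := nth i S false.

Fixpoint all_subsets (n : nat) : list (list bool) :=
  match n with
  | O => [nil]
  | Datatypes.S m => flat_map (fun l => [false :: l; true :: l]) (all_subsets m)
  end.

Definition empty_set (N : nat) : list bool := repeat false N.
Definition singleton (N j : nat) : list bool := map (fun k => Nat.eqb k j) (seq 0 N).
Definition nonempty (S : list bool) : bool := existsb (fun b => b) S.

Definition Rsum_list (l : list R) : R := fold_right Rplus 0 l.
Definition Rprod_upto (n : nat) (f : nat -> R) : R := fold_right Rmult 1 (map f (seq 0 n)).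

(* Payoff function: r S i = r^S_i. *)
Definition payoffs := list bool -> nat -> R.

(* A strategy profile: x i t = probability that player i quits at stage t
   (stages indexed from 0) given nobody quit before. *)
Definition profile := nat -> nat -> R.

Definition is_strategy (y : nat -> R) : Prop := forall t, 0 <= y t <= 1.
Definition is_profile (N : nat) (x : profile) : Prop :=
  forall i, (i < N)%nat -> is_strategy (x i).
Definition stationary (N : nat) (x : profile) : Prop :=
  forall i t, (i < N)%nat -> x i t = x i 0%nat.

Definition stage_prob (N : nat) (x : profile) (S : list bool) (t : nat) : R :=
  Rprod_upto N (fun i => if mem S i then x i t else 1 - x i t).

Definition cont_prob (N : nat) (x : profile) (t : nat) : R :=
  Rprod_upto N (fun i => 1 - x i t).
Definition surv (N : nat) (x : profile) (t : nat) : R :=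
  Rprod_upto t (cont_prob N x).

(* Expected payoff of player i when the game is stopped after n stages with
   payoff r^emptyset if nobody has quit.  Its limit as n -> oo is
   gamma_i(x) = E_x[r^{S*}_i]. *)
Definition partial_payoff (N : nat) (r : payoffs) (x : profile) (i n : nat) : R :=
  Rsum_list (map (fun t =>
      surv N x t *
      Rsum_list (map (fun S => stage_prob N x S t * r S i)
                     (filter nonempty (all_subsets N))))
    (seq 0 n))
  + surv N x n * r (empty_set N) i.

Definition payoff_is (N : nat) (r : payoffs) (x : profile) (i : nat) (v : R) : Prop :=
  Un_cv (partial_payoff N r x i) v.

Definition deviate (x : profile) (i : nat) (y : nat -> R) : profile :=
  fun j => if Nat.eqb j i then y else x j.

Definition eps_equilibrium (N : nat) (r : payoffs) (eps : R) (x : profile) : Prop :=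
  is_profile N x /\
  forall i, (i < N)%nat ->
    exists v, payoff_is N r x i v /\
      forall y, is_strategy y ->
        forall v', payoff_is N r (deviate x i y) i v' -> v >= v' - eps.

Fixpoint in_I (N : nat) (r : payoffs) (l : nat) (i : nat) : Prop :=
  match l with
  | O => (i < N)%nat
  | Datatypes.S l' => in_I N r l' i /\
      exists j, in_I N r l' j /\ j <> i /\ r (singleton N j) i <= 0
  end.

Definition normal (N : nat) (r : payoffs) (i : nat) : Prop :=
  forall l, in_I N r l i.

(* Main.v *)
Require Import Defs.
From Stdlib Require Import Reals List Lra Lia Arith Classical FunctionalExtensionality.
Import ListNotations.
Open Scope R_scope.


Lemma Rsum_list_app l1 l2 : Rsum_list (l1 ++ l2) = Rsum_list l1 + Rsum_list l2.
Proof. induction l1; simpl; [ring| unfold Rsum_list in *; simpl; rewrite IHl1; ring]. Qed.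

Lemma Rsum_list_map_plus {A} (f g : A -> R) l :
  Rsum_list (map (fun x => f x + g x) l) = Rsum_list (map f l) + Rsum_list (map g l).
Proof. induction l; unfold Rsum_list in *; simpl; [ring| rewrite IHl; ring]. Qed.

Lemma Rsum_list_map_scal {A} (c : R) (f : A -> R) l :
  Rsum_list (map (fun x => c * f x) l) = c * Rsum_list (map f l).
Proof. induction l; unfold Rsum_list in *; simpl; [ring| rewrite IHl; ring]. Qed.

Lemma Rsum_list_map_ext {A} (f g : A -> R) l :
  (forall x, In x l -> f x = g x) -> Rsum_list (map f l) = Rsum_list (map g l).
Proof. intro H. f_equal. apply map_ext_in. auto. Qed.

Lemma Rsum_filter {A} (p : A -> bool) (g : A -> R) l :
  Rsum_list (map g (filter p l)) = Rsum_list (map (fun x => if p x then g x else 0) l).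
Proof.
  induction l; simpl; auto. destruct (p a); unfold Rsum_list in *; simpl; rewrite IHl; ring.
Qed.

Lemma Rsum_flat_map {A B} (h : B -> R) (g : A -> list B) l :
  Rsum_list (map h (flat_map g l)) = Rsum_list (map (fun x => Rsum_list (map h (g x))) l).
Proof.
  induction l; simpl; auto. rewrite map_app, Rsum_list_app, IHl. reflexivity.
Qed.

Lemma Rprod_upto_S_front n f : Rprod_upto (S n) f = f 0%nat * Rprod_upto n (fun k => f (S k)).
Proof.
  unfold Rprod_upto. rewrite <- cons_seq. simpl. f_equal. f_equal.
  rewrite <- seq_shift, map_map. reflexivity.
Qed.

Lemma fold_mult_acc l a : fold_right Rmult a l = fold_right Rmult 1 l * a.
Proof. induction l; simpl; [ring| rewrite IHl; ring]. Qed.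

Lemma Rprod_upto_S n f : Rprod_upto (S n) f = Rprod_upto n f * f n.
Proof.
  unfold Rprod_upto. rewrite seq_S, map_app, fold_right_app. simpl.
  rewrite fold_mult_acc. ring.
Qed.

Lemma Rprod_upto_ext n f g : (forall k, (k < n)%nat -> f k = g k) -> Rprod_upto n f = Rprod_upto n g.
Proof.
  intro H. unfold Rprod_upto. f_equal. apply map_ext_in. intros a Ha. apply in_seq in Ha. apply H. lia.
Qed.

Lemma Rprod_upto_one n : Rprod_upto n (fun _ => 1) = 1.
Proof. induction n; [reflexivity|]. rewrite Rprod_upto_S, IHn. ring. Qed.

Lemma Rprod_upto_nonneg n f : (forall k, (k < n)%nat -> 0 <= f k) -> 0 <= Rprod_upto n f.
Proof.
  induction n; intro H. unfold Rprod_upto; simpl; lra.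
  rewrite Rprod_upto_S. apply Rmult_le_pos. apply IHn; intros; apply H; lia. apply H; lia.
Qed.

Lemma Rprod_upto_le1 n f : (forall k, (k < n)%nat -> 0 <= f k <= 1) -> Rprod_upto n f <= 1.
Proof.
  induction n; intro H. unfold Rprod_upto; simpl; lra.
  rewrite Rprod_upto_S.
  assert (0 <= Rprod_upto n f) by (apply Rprod_upto_nonneg; intros; apply H; lia).
  assert (Rprod_upto n f <= 1) by (apply IHn; intros; apply H; lia).
  assert (0 <= f n <= 1) by (apply H; lia). nra.
Qed.

Lemma Rprod_pull n f i : (i < n)%nat ->
  Rprod_upto n f = f i * Rprod_upto n (fun k => if Nat.eqb k i then 1 else f k).
Proof.
  revert f i. induction n; intros f i Hi. lia.
  rewrite !Rprod_upto_S_front. destruct i as [|i].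
  - simpl. f_equal. replace (1 * _) with (Rprod_upto n (fun k => f (S k))) by ring.
    reflexivity.
  - rewrite (IHn (fun k => f (S k)) i) by lia. simpl. ring.
Qed.

Definition E (n : nat) (w : nat -> bool -> R) (F : list bool -> R) : R :=
  Rsum_list (map (fun S => Rprod_upto n (fun k => w k (mem S k)) * F S) (all_subsets n)).

Lemma E_S m w F : E (S m) w F =
  w 0%nat false * E m (fun k => w (S k)) (fun l => F (false :: l)) +
  w 0%nat true * E m (fun k => w (S k)) (fun l => F (true :: l)).
Proof.
  unfold E. simpl all_subsets. rewrite Rsum_flat_map.
  rewrite <- !Rsum_list_map_scal, <- Rsum_list_map_plus.
  apply Rsum_list_map_ext. intros l _. unfold Rsum_list at 1. simpl.
  rewrite !Rprod_upto_S_front. unfold mem. simpl. ring.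
Qed.

Lemma E_ext n w w' F : (forall k b, (k < n)%nat -> w k b = w' k b) -> E n w F = E n w' F.
Proof.
  intro H. unfold E. apply Rsum_list_map_ext. intros S _. f_equal.
  apply Rprod_upto_ext. intros; apply H; auto.
Qed.

Definition upd (w : nat -> bool -> R) (i : nat) (v : bool -> R) : nat -> bool -> R :=
  fun j => if Nat.eqb j i then v else w j.
Definition pt (c : bool) : bool -> R := fun b => if Bool.eqb c b then 1 else 0.

Lemma E_pivot n : forall w F i, (i < n)%nat ->
  E n w F = w i true * E n (upd w i (pt true)) F + w i false * E n (upd w i (pt false)) F.
Proof.
  induction n; intros w F i Hi. lia.
  rewrite !E_S. destruct i as [|i].
  - unfold upd, pt; simpl. ring.
  - rewrite (IHn (fun k => w (S k)) (fun l => F (false :: l)) i) by lia.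
    rewrite (IHn (fun k => w (S k)) (fun l => F (true :: l)) i) by lia.
    unfold upd at 1 2 3 4. simpl Nat.eqb. cbv beta iota.
    replace (fun k => upd w (S i) (pt true) (S k)) with (upd (fun k => w (S k)) i (pt true))
      by (apply functional_extensionality; intro k; unfold upd; reflexivity).
    replace (fun k => upd w (S i) (pt false) (S k)) with (upd (fun k => w (S k)) i (pt false))
      by (apply functional_extensionality; intro k; unfold upd; reflexivity).
    unfold upd; simpl; ring.
Qed.

Lemma E_pure n : forall w c F, (forall k b, (k < n)%nat -> w k b = pt (c k) b) ->
  E n w F = F (map c (seq 0 n)).
Proof.
  induction n; intros w c F H.
  - unfold E. simpl. unfold Rsum_list, Rprod_upto. simpl. ring.
  - rewrite E_S. rewrite <- cons_seq, <- seq_shift. cbn [map]. rewrite map_map.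
    rewrite (IHn (fun k => w (S k)) (fun k => c (S k)) (fun l => F (false :: l))).
    2:{ intros; apply H; lia. }
    rewrite (IHn (fun k => w (S k)) (fun k => c (S k)) (fun l => F (true :: l))).
    2:{ intros; apply H; lia. }
    rewrite !H by lia. unfold pt. destruct (c 0%nat); simpl; ring.
Qed.


Definition wprof (x : profile) (t : nat) : nat -> bool -> R :=
  fun k b => if b then x k t else 1 - x k t.
Definition Fi (r : payoffs) (i : nat) : list bool -> R :=
  fun S => if nonempty S then r S i else 0.
Definition setc (c : nat -> bool) (k : nat) (v : bool) : nat -> bool :=
  fun j => if Nat.eqb j k then v else c j.

Lemma stage_sum_E N x r i t :
  Rsum_list (map (fun S => stage_prob N x S t * r S i) (filter nonempty (all_subsets N)))
  = E N (wprof x t) (Fi r i).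
Proof.
  rewrite Rsum_filter. unfold E. apply Rsum_list_map_ext. intros S _.
  unfold Fi, stage_prob, wprof. destruct (nonempty S); ring.
Qed.

Lemma deviate_self x i : deviate x i (x i) = x.
Proof.
  apply functional_extensionality; intro j. unfold deviate.
  destruct (Nat.eqb_spec j i); subst; reflexivity.
Qed.

Lemma dev_stage N x i y t F : stationary N x -> (i < N)%nat ->
  E N (wprof (deviate x i y) t) F =
  y t * E N (upd (wprof x 0) i (pt true)) F + (1 - y t) * E N (upd (wprof x 0) i (pt false)) F.
Proof.
  intros Hst Hi. rewrite (E_pivot N _ F i Hi).
  replace (wprof (deviate x i y) t i true) with (y t)
    by (unfold wprof, deviate; rewrite Nat.eqb_refl; reflexivity).
  replace (wprof (deviate x i y) t i false) with (1 - y t)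
    by (unfold wprof, deviate; rewrite Nat.eqb_refl; reflexivity).
  assert (HE : forall v, E N (upd (wprof (deviate x i y) t) i v) F = E N (upd (wprof x 0) i v) F).
  { intro v. apply E_ext; intros k b Hk; unfold upd;
    destruct (Nat.eqb_spec k i); auto; unfold wprof, deviate.
    apply Nat.eqb_neq in n; rewrite n; rewrite (Hst k t Hk); reflexivity. }
  rewrite !HE. reflexivity.
Qed.

Lemma dev_cont N x i y t : stationary N x -> (i < N)%nat ->
  cont_prob N (deviate x i y) t =
  (1 - y t) * Rprod_upto N (fun k => if Nat.eqb k i then 1 else 1 - x k 0%nat).
Proof.
  intros Hst Hi. unfold cont_prob. rewrite (Rprod_pull N _ i Hi).
  unfold deviate at 1. rewrite Nat.eqb_refl. f_equal.
  apply Rprod_upto_ext. intros k Hk. destruct (Nat.eqb_spec k i); auto.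
  unfold deviate. apply Nat.eqb_neq in n. rewrite n, (Hst k t Hk). reflexivity.
Qed.

Lemma nonempty_true c n k : (k < n)%nat -> c k = true -> nonempty (map c (seq 0 n)) = true.
Proof.
  intros Hk Hc. unfold nonempty. apply existsb_exists. exists true. split; auto.
  apply in_map_iff. exists k. split; auto. apply in_seq. lia.
Qed.

Lemma nonempty_false c n : (forall k, (k < n)%nat -> c k = false) -> nonempty (map c (seq 0 n)) = false.
Proof.
  intros H. unfold nonempty. destruct (existsb _ _) eqn:E0; auto.
  apply existsb_exists in E0. destruct E0 as [b [Hb Hbt]]. subst.
  apply in_map_iff in Hb. destruct Hb as [k [Hk Hin]]. apply in_seq in Hin.
  rewrite H in Hk by lia. discriminate.
Qed.

Lemma map_c_ext (c c' : nat -> bool) n : (forall k, (k < n)%nat -> c k = c' k) -> map c (seq 0 n) = map c' (seq 0 n).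
Proof. intro H. apply map_ext_in. intros a Ha. apply in_seq in Ha. apply H. lia. Qed.

Lemma length_mapc (c : nat -> bool) n : length (map c (seq 0 n)) = n.
Proof. rewrite length_map, length_seq. reflexivity. Qed.

Lemma Eone N (w : nat -> bool -> R) (F : list bool -> R) k1 (p : R) (c0 : nat -> bool) : (k1 < N)%nat ->
  (forall b, w k1 b = if b then p else 1 - p) ->
  (forall k b, (k < N)%nat -> k <> k1 -> w k b = pt (c0 k) b) ->
  E N w F = p * F (map (setc c0 k1 true) (seq 0 N)) + (1 - p) * F (map (setc c0 k1 false) (seq 0 N)).
Proof.
  intros H1 Hw1 Hw. rewrite (E_pivot N w F k1 H1). rewrite !Hw1.
  rewrite (E_pure N _ (setc c0 k1 true)), (E_pure N _ (setc c0 k1 false)). ring.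
  all: intros k b Hk; unfold upd, setc; destruct (Nat.eqb_spec k k1); auto.
Qed.

Lemma Etwo N (w : nat -> bool -> R) (F : list bool -> R) k1 k2 (p q : R) (c0 : nat -> bool) : (k1 < N)%nat -> (k2 < N)%nat -> k1 <> k2 ->
  (forall b, w k1 b = if b then p else 1 - p) ->
  (forall b, w k2 b = if b then q else 1 - q) ->
  (forall k b, (k < N)%nat -> k <> k1 -> k <> k2 -> w k b = pt (c0 k) b) ->
  E N w F = p * q * F (map (setc (setc c0 k1 true) k2 true) (seq 0 N))
          + p * (1 - q) * F (map (setc (setc c0 k1 true) k2 false) (seq 0 N))
          + (1 - p) * q * F (map (setc (setc c0 k1 false) k2 true) (seq 0 N))
          + (1 - p) * (1 - q) * F (map (setc (setc c0 k1 false) k2 false) (seq 0 N)).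
Proof.
  intros H1 H2 H12 Hw1 Hw2 Hw. rewrite (E_pivot N w F k1 H1). rewrite !Hw1.
  rewrite (E_pivot N (upd w k1 (pt true)) F k2 H2).
  rewrite (E_pivot N (upd w k1 (pt false)) F k2 H2).
  assert (Hn : Nat.eqb k2 k1 = false) by (apply Nat.eqb_neq; auto).
  assert (Hu : forall v b, upd w k1 v k2 b = w k2 b) by (intros; unfold upd; rewrite Hn; reflexivity).
  rewrite !Hu, !Hw2.
  rewrite (E_pure N _ (setc (setc c0 k1 true) k2 true)), (E_pure N _ (setc (setc c0 k1 true) k2 false)),
    (E_pure N _ (setc (setc c0 k1 false) k2 true)), (E_pure N _ (setc (setc c0 k1 false) k2 false)). ring.
  all: intros k b Hk; unfold upd, setc; destruct (Nat.eqb_spec k k2); auto;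
       destruct (Nat.eqb_spec k k1); auto.
Qed.

Lemma Fi_false r i c N : (forall k, (k < N)%nat -> c k = false) -> Fi r i (map c (seq 0 N)) = 0.
Proof. intro H. unfold Fi. rewrite nonempty_false; auto. Qed.

Lemma Fi_single r i c N k : (k < N)%nat -> (forall k', (k' < N)%nat -> c k' = Nat.eqb k' k) ->
  Fi r i (map c (seq 0 N)) = r (singleton N k) i.
Proof.
  intros Hk H. unfold Fi. rewrite (nonempty_true c N k Hk).
  - unfold singleton. rewrite (map_c_ext c (fun k' => Nat.eqb k' k) N H). reflexivity.
  - rewrite H by auto. apply Nat.eqb_refl.
Qed.

Lemma Fi_bound N r i c : (forall S i, length S = N -> (i < N)%nat -> -1 <= r S i <= 1) ->
  (i < N)%nat -> -1 <= Fi r i (map c (seq 0 N)) <= 1.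
Proof.
  intros hr Hi. unfold Fi. destruct nonempty. apply hr; auto. apply length_mapc. lra.
Qed.


Lemma sum_seq_S (h : nat -> R) n :
  Rsum_list (map h (seq 0 (S n))) = Rsum_list (map h (seq 0 n)) + h n.
Proof. rewrite seq_S, map_app, Rsum_list_app. unfold Rsum_list. simpl. ring. Qed.

Lemma pow_cv0 b : 0 <= b < 1 -> Un_cv (fun n => b ^ n) 0.
Proof.
  intros Hb eps He. destruct (pow_lt_1_zero b) with eps as [M HM]; auto.
  rewrite Rabs_right; lra.
  exists M. intros n Hn. unfold Rdist. rewrite Rminus_0_r. auto.
Qed.

Lemma cv_const c : Un_cv (fun _ => c) c.
Proof. intros eps He. exists 0%nat. intros. unfold Rdist. rewrite Rminus_diag, Rabs_R0. auto. Qed.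

Lemma cv_affine_pow M K b : 0 <= b < 1 -> Un_cv (fun n => M + b ^ n * K) M.
Proof.
  intro Hb. assert (H := CV_plus _ _ _ _ (cv_const M) (CV_mult _ _ _ _ (pow_cv0 b Hb) (cv_const K))).
  rewrite Rmult_0_l, Rplus_0_r in H. exact H.
Qed.

Lemma AL (s g y : nat -> R) Q C a W R0 v :
  (forall t, 0 <= y t <= 1) -> s 0%nat = 1 ->
  (forall t, s (S t) = s t * ((1 - y t) * a)) ->
  (forall t, g t = y t * Q + (1 - y t) * C) ->
  0 <= a <= 1 -> C = W * (1 - a) -> (a < 1 \/ W = R0) ->
  Un_cv (fun n => Rsum_list (map (fun t => s t * g t) (seq 0 n)) + s n * R0) v ->
  v <= Rmax Q W.
Proof.
  intros Hy Hs0 HsS Hg Ha HC Hcase Hv.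
  set (M := Rmax Q W).
  assert (HQ : Q <= M) by apply Rmax_l. assert (HW : W <= M) by apply Rmax_r.
  assert (Hpos : forall n, 0 <= s n /\ s n <= a ^ n).
  { induction n. rewrite Hs0. simpl. lra. rewrite HsS. simpl. destruct IHn.
    specialize (Hy n). split. apply Rmult_le_pos; auto. apply Rmult_le_pos; lra.
    assert (0 <= a ^ n) by (apply pow_le; lra).
    assert (s n * ((1 - y n) * a) <= s n * a) by (apply Rmult_le_compat_l; nra). nra. }
  assert (Hphi : forall n, Rsum_list (map (fun t => s t * g t) (seq 0 n)) + s n * M <= M).
  { induction n. simpl. rewrite Hs0. unfold Rsum_list. simpl. lra.
    rewrite sum_seq_S, HsS, Hg. destruct (Hpos n) as [H0 _]. specialize (Hy n).
    assert (y n * (Q - M) + (1 - y n) * (C + a * M - M) <= 0).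
    { rewrite HC. assert ((1 - y n) * (W * (1 - a) + a * M - M) = (1 - y n) * (1 - a) * (W - M)) by ring.
      assert (0 <= (1 - y n) * (1 - a)) by nra. nra. }
    assert (s n * (y n * (Q - M) + (1 - y n) * (C + a * M - M)) <= 0) by nra.
    nra. }
  destruct Hcase as [Ha1 | HWR].
  - apply (Rle_cv_lim (Vn := fun n => M + a ^ n * Rabs (R0 - M))
      (Un := fun n => Rsum_list (map (fun t => s t * g t) (seq 0 n)) + s n * R0)) ; auto.
    2: apply cv_affine_pow; lra.
    intro n. specialize (Hphi n). destruct (Hpos n) as [H1 H2].
    assert (s n * (R0 - M) <= s n * Rabs (R0 - M)) by (apply Rmult_le_compat_l; auto; apply Rle_abs).
    assert (s n * Rabs (R0 - M) <= a ^ n * Rabs (R0 - M)) by (apply Rmult_le_compat_r; auto; apply Rabs_pos).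
    nra.
  - apply (Rle_cv_lim (Vn := fun _ => M)
      (Un := fun n => Rsum_list (map (fun t => s t * g t) (seq 0 n)) + s n * R0)) ; auto.
    2: apply cv_const.
    intro n. specialize (Hphi n). destruct (Hpos n) as [H1 H2].
    assert (s n * R0 <= s n * M) by (apply Rmult_le_compat_l; auto; lra). lra.
Qed.

Lemma SPst (s : nat -> R) G b R0 : s 0%nat = 1 -> (forall t, s (S t) = s t * b) -> 0 <= b < 1 ->
  Un_cv (fun n => Rsum_list (map (fun t => s t * G) (seq 0 n)) + s n * R0) (G / (1 - b)).
Proof.
  intros Hs0 HsS Hb.
  assert (Hs : forall n, s n = b ^ n).
  { induction n. auto. rewrite HsS, IHn. simpl. ring. }
  assert (Hsum : forall n, Rsum_list (map (fun t => s t * G) (seq 0 n)) = G / (1 - b) - b ^ n * (G / (1 - b))).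
  { induction n. unfold Rsum_list. simpl. ring. rewrite sum_seq_S, IHn, Hs. simpl. field. lra. }
  assert (H := cv_affine_pow (G / (1 - b)) (R0 - G / (1 - b)) b Hb).
  intros eps He. destruct (H eps He) as [K HK]. exists K. intros n Hn.
  specialize (HK n Hn). rewrite Hsum, Hs.
  replace (G / (1 - b) - b ^ n * (G / (1 - b)) + b ^ n * R0) with (G / (1 - b) + b ^ n * (R0 - G / (1 - b))) by ring.
  exact HK.
Qed.

Lemma SPzero (s : nat -> R) R0 : (forall t, s t = 1) ->
  Un_cv (fun n => Rsum_list (map (fun t => s t * 0) (seq 0 n)) + s n * R0) R0.
Proof.
  intros Hs. intros eps He. exists 0%nat. intros n _.
  assert (Rsum_list (map (fun t => s t * 0) (seq 0 n)) = 0).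
  { induction n. reflexivity. rewrite sum_seq_S, IHn. ring. }
  rewrite H, Hs. unfold Rdist. replace (0 + 1 * R0 - R0) with 0 by ring. rewrite Rabs_R0. lra.
Qed.


Definition Qv N r (x : profile) i := E N (upd (wprof x 0) i (pt true)) (Fi r i).
Definition Cv N r (x : profile) i := E N (upd (wprof x 0) i (pt false)) (Fi r i).
Definition av N (x : profile) i := Rprod_upto N (fun k => if Nat.eqb k i then 1 else 1 - x k 0%nat).

Lemma Un_cv_ext (u w : nat -> R) l : (forall n, u n = w n) -> Un_cv w l -> Un_cv u l.
Proof. intros H Hw eps He. destruct (Hw eps He) as [K HK]. exists K. intros n Hn. rewrite H. auto. Qed.

Lemma surv_S N x t : surv N x (S t) = surv N x t * cont_prob N x t.
Proof. unfold surv. apply Rprod_upto_S. Qed.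

Lemma surv_0 N x : surv N x 0 = 1.
Proof. reflexivity. Qed.

Lemma dev_bound N r x i y v' : stationary N x -> (i < N)%nat -> is_strategy y ->
  forall W, Cv N r x i = W * (1 - av N x i) -> 0 <= av N x i <= 1 ->
  (av N x i < 1 \/ W = r (empty_set N) i) ->
  payoff_is N r (deviate x i y) i v' -> v' <= Rmax (Qv N r x i) W.
Proof.
  intros Hst Hi Hy W HC Ha Hcase Hv.
  unfold payoff_is, partial_payoff in Hv.
  apply (AL (surv N (deviate x i y)) (fun t => Rsum_list (map (fun S => stage_prob N (deviate x i y) S t * r S i) (filter nonempty (all_subsets N)))) y (Qv N r x i) (Cv N r x i) (av N x i) W (r (empty_set N) i) v'); auto.
  - intro t. rewrite surv_S, (dev_cont N x i y t Hst Hi). reflexivity.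
  - intro t. simpl. rewrite stage_sum_E, (dev_stage N x i y t _ Hst Hi). reflexivity.
Qed.

Lemma actual_payoff N r x i : stationary N x -> (i < N)%nat -> is_profile N x ->
  0 <= av N x i <= 1 -> (1 - x i 0%nat) * av N x i < 1 ->
  payoff_is N r x i ((x i 0%nat * Qv N r x i + (1 - x i 0%nat) * Cv N r x i) / (1 - (1 - x i 0%nat) * av N x i)).
Proof.
  intros Hst Hi Hpr Ha Hb. unfold payoff_is, partial_payoff.
  assert (Hc : 0 <= x i 0%nat <= 1) by (apply Hpr; auto).
  eapply Un_cv_ext.
  2:{ apply (SPst (surv N x) (x i 0%nat * Qv N r x i + (1 - x i 0%nat) * Cv N r x i) ((1 - x i 0%nat) * av N x i) (r (empty_set N) i)).
      - reflexivity.
      - intro t. rewrite surv_S. f_equal.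
        pose proof (dev_cont N x i (x i) t Hst Hi) as H. rewrite deviate_self in H. rewrite H.
        rewrite (Hst i t Hi). reflexivity.
      - split; [|auto]. apply Rmult_le_pos; lra. }
  intro n. simpl. f_equal. apply Rsum_list_map_ext. intros t _. f_equal.
  rewrite stage_sum_E.
  pose proof (dev_stage N x i (x i) t (Fi r i) Hst Hi) as H. rewrite deviate_self in H. rewrite H.
  rewrite (Hst i t Hi). reflexivity.
Qed.

Lemma actual_payoff0 N r x i : stationary N x -> (i < N)%nat ->
  x i 0%nat = 0 -> av N x i = 1 -> Cv N r x i = 0 ->
  payoff_is N r x i (r (empty_set N) i).
Proof.
  intros Hst Hi Hx Ha HC. unfold payoff_is, partial_payoff.
  assert (Hs : forall t, surv N x t = 1).
  { induction t. reflexivity. rewrite surv_S, IHt.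
    pose proof (dev_cont N x i (x i) t Hst Hi) as H. rewrite deviate_self in H. rewrite H.
    rewrite (Hst i t Hi), Hx. fold (av N x i). rewrite Ha. ring. }
  eapply Un_cv_ext. 2: apply (SPzero (surv N x) (r (empty_set N) i) Hs).
  intro n. simpl. f_equal. apply Rsum_list_map_ext. intros t _. f_equal.
  rewrite stage_sum_E.
  pose proof (dev_stage N x i (x i) t (Fi r i) Hst Hi) as H. rewrite deviate_self in H. rewrite H.
  rewrite (Hst i t Hi), Hx. fold (Cv N r x i). rewrite HC. ring.
Qed.

Lemma player_ok N r x i eps v W : stationary N x -> (i < N)%nat ->
  Cv N r x i = W * (1 - av N x i) -> 0 <= av N x i <= 1 ->
  (av N x i < 1 \/ W = r (empty_set N) i) ->
  payoff_is N r x i v -> v >= Qv N r x i - eps -> v >= W - eps ->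
  exists v, payoff_is N r x i v /\
      forall y, is_strategy y ->
        forall v', payoff_is N r (deviate x i y) i v' -> v >= v' - eps.
Proof.
  intros Hst Hi HC Ha Hcase Hv H1 H2. exists v. split; auto.
  intros y Hy v' Hv'. pose proof (dev_bound N r x i y v' Hst Hi Hy W HC Ha Hcase Hv').
  unfold Rmax in H. destruct (Rle_dec _ _); lra.
Qed.


Ltac eqb_cases :=
  repeat (match goal with |- context [Nat.eqb ?a ?b] => destruct (Nat.eqb_spec a b) end).

Ltac solve_c := let k := fresh "k" in let Hk := fresh "Hk" in
  intros k Hk; unfold setc; eqb_cases; subst; first [reflexivity | congruence | lia].

Lemma prod_all1 N f : (forall k, (k < N)%nat -> f k = 1) -> Rprod_upto N f = 1.
Proof. intro H. rewrite (Rprod_upto_ext N f (fun _ => 1)) by auto. apply Rprod_upto_one. Qed.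

Lemma prod1 N f k1 : (k1 < N)%nat -> (forall k, (k < N)%nat -> k <> k1 -> f k = 1) ->
  Rprod_upto N f = f k1.
Proof.
  intros H1 H. rewrite (Rprod_pull N f k1 H1). rewrite prod_all1. ring.
  intros k Hk. destruct (Nat.eqb_spec k k1); auto.
Qed.

Lemma prod2 N f k1 k2 : (k1 < N)%nat -> (k2 < N)%nat -> k1 <> k2 ->
  (forall k, (k < N)%nat -> k <> k1 -> k <> k2 -> f k = 1) ->
  Rprod_upto N f = f k1 * f k2.
Proof.
  intros H1 H2 H12 H. rewrite (Rprod_pull N f k1 H1). rewrite (Rprod_pull N _ k2 H2).
  rewrite prod_all1. apply Nat.eqb_neq in H12. rewrite Nat.eqb_sym, H12. ring.
  intros k Hk. destruct (Nat.eqb_spec k k2); auto. destruct (Nat.eqb_spec k k1); auto.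
Qed.

Definition prof0 : profile := fun _ _ => 0.

Lemma caseB2 N r eps : eps > 0 ->
  (forall i, (i < N)%nat -> r (singleton N i) i = 0) ->
  (forall i, (i < N)%nat -> r (empty_set N) i > 0) ->
  exists x : profile, stationary N x /\ eps_equilibrium N r eps x.
Proof.
  intros He hdiag Hpos. exists prof0.
  assert (Hst : stationary N prof0) by (intros i t _; reflexivity).
  split; auto. split. { intros i _ t. unfold prof0. lra. }
  intros i Hi.
  assert (Ha : av N prof0 i = 1).
  { unfold av. apply prod_all1. intros k _. unfold prof0. destruct (k =? i); ring. }
  assert (HC : Cv N r prof0 i = 0).
  { unfold Cv. rewrite (E_pure N _ (setc (fun _ => false) i false)).
    apply Fi_false. solve_c.
    intros k b Hk. unfold upd, setc, wprof, prof0, pt. destruct (k =? i); auto. destruct b; simpl; ring. }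
  assert (HQ : Qv N r prof0 i = 0).
  { unfold Qv. rewrite (E_pure N _ (setc (fun _ => false) i true)).
    rewrite (Fi_single r i _ N i Hi). apply hdiag; auto. solve_c.
    intros k b Hk. unfold upd, setc, wprof, prof0, pt. destruct (k =? i); auto. destruct b; simpl; ring. }
  apply (player_ok N r prof0 i eps (r (empty_set N) i) (r (empty_set N) i)); auto.
  - rewrite HC, Ha. ring.
  - rewrite Ha. lra.
  - apply actual_payoff0; auto.
  - rewrite HQ. specialize (Hpos i Hi). lra.
  - lra.
Qed.


Definition prof1 (k : nat) (p : R) : profile := fun k' _ => if Nat.eqb k' k then p else 0.

Ltac solve_w :=
  intros; unfold upd, setc, wprof, pt, prof1 in *; eqb_cases; subst;
  try congruence; try lia;
  match goal with
  | b : bool |- _ => destruct b; simpl; ring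
  | _ => reflexivity
  end.

Lemma caseB1 N r eps k : eps > 0 ->
  (forall S i, length S = N -> (i < N)%nat -> -1 <= r S i <= 1) ->
  (forall i, (i < N)%nat -> r (singleton N i) i = 0) ->
  (k < N)%nat -> r (empty_set N) k <= 0 ->
  (forall i j, (i < N)%nat -> (j < N)%nat -> j <> i -> r (singleton N j) i > 0) ->
  exists x : profile, stationary N x /\ eps_equilibrium N r eps x.
Proof.
  intros He hr hdiag Hk Hk0 Hedge.
  set (e := Rmin eps 1). assert (He1 : 0 < e <= 1 /\ e <= eps).
  { unfold e. unfold Rmin. destruct (Rle_dec eps 1); lra. }
  set (p := e / 2). assert (Hp : 0 < p <= 1/2) by (unfold p; lra).
  assert (Hpe : p <= eps) by (unfold p; lra).
  exists (prof1 k p).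
  assert (Hst : stationary N (prof1 k p)) by (intros i t _; reflexivity).
  split; auto. split. { intros i _ t. unfold prof1. destruct (i =? k); lra. }
  intros i Hi. destruct (Nat.eq_dec i k) as [->|Hik].
  - assert (Ha : av N (prof1 k p) k = 1).
    { unfold av. apply prod_all1. intros k' _. unfold prof1. destruct (k' =? k); ring. }
    assert (HC : Cv N r (prof1 k p) k = 0).
    { unfold Cv. rewrite (E_pure N _ (setc (fun _ => false) k false)).
      apply Fi_false. solve_c. solve_w. }
    assert (HQ : Qv N r (prof1 k p) k = 0).
    { unfold Qv. rewrite (E_pure N _ (setc (fun _ => false) k true)).
      rewrite (Fi_single r k _ N k Hk). apply hdiag; auto. solve_c. solve_w. }
    assert (Hx : prof1 k p k 0%nat = p) by (unfold prof1; rewrite Nat.eqb_refl; reflexivity).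
    eapply (player_ok N r (prof1 k p) k eps _ (r (empty_set N) k) Hst Hk); auto.
    + rewrite HC, Ha. ring.
    + rewrite Ha. lra.
    + apply actual_payoff; auto. intros i' _ t. unfold prof1. destruct (i' =? k); lra.
      rewrite Ha; lra. rewrite Ha, Hx. lra.
    + rewrite HQ, HC, Hx, Ha. replace ((p * 0 + (1 - p) * 0) / (1 - (1 - p) * 1)) with 0 by (field; lra). lra.
    + rewrite HC, Hx, HQ, Ha. replace ((p * 0 + (1 - p) * 0) / (1 - (1 - p) * 1)) with 0 by (field; lra). lra.
  - assert (Ha : av N (prof1 k p) i = 1 - p).
    { unfold av. rewrite (prod1 N _ k Hk). unfold prof1. rewrite Nat.eqb_refl.
      destruct (Nat.eqb_spec k i); [congruence| reflexivity].
      intros k' Hk' Hne. unfold prof1. destruct (k' =? i); auto.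
      apply Nat.eqb_neq in Hne. rewrite Hne. ring. }
    assert (HC : Cv N r (prof1 k p) i = p * r (singleton N k) i).
    { unfold Cv. rewrite (Eone N _ _ k p (setc (fun _ => false) i false)); auto.
      rewrite (Fi_single r i _ N k Hk), (Fi_false r i _ N). ring. solve_c. solve_c.
      solve_w. solve_w. }
    assert (HQ : Qv N r (prof1 k p) i <= p).
    { unfold Qv. rewrite (Eone N _ _ k p (setc (fun _ => false) i true)); auto.
      rewrite (Fi_single r i (setc (setc (fun _ => false) i true) k false) N i Hi). rewrite hdiag by auto.
      pose proof (Fi_bound N r i (setc (setc (fun _ => false) i true) k true) hr Hi). nra.
      solve_c. solve_w. solve_w. }
    assert (Hx : prof1 k p i 0%nat = 0) by (unfold prof1; apply Nat.eqb_neq in Hik; rewrite Hik; reflexivity).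
    assert (Hrk := Hedge i k Hi Hk (not_eq_sym Hik)).
    eapply (player_ok N r (prof1 k p) i eps _ (r (singleton N k) i) Hst Hi); auto.
    + rewrite HC, Ha. ring.
    + rewrite Ha. lra.
    + rewrite Ha. left. lra.
    + apply actual_payoff; auto. intros i' _ t. unfold prof1. destruct (i' =? k); lra.
      rewrite Ha; lra. rewrite Ha, Hx. lra.
    + rewrite HC, Hx, Ha. replace ((0 * Qv N r (prof1 k p) i + (1 - 0) * (p * r (singleton N k) i)) / (1 - (1 - 0) * (1 - p))) with (r (singleton N k) i) by (field; lra). lra.
    + rewrite HC, Hx, Ha. replace ((0 * Qv N r (prof1 k p) i + (1 - 0) * (p * r (singleton N k) i)) / (1 - (1 - 0) * (1 - p))) with (r (singleton N k) i) by (field; lra). lra.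
Qed.


Definition prof2 (k1 k2 : nat) (p q : R) : profile :=
  fun k _ => if Nat.eqb k k1 then p else if Nat.eqb k k2 then q else 0.

Ltac solve_w2 :=
  intros; unfold upd, setc, wprof, pt, prof2 in *; eqb_cases; subst;
  try congruence; try lia;
  match goal with
  | b : bool |- _ => destruct b; simpl; ring
  | _ => reflexivity
  end.

Lemma divge (num D L : R) : D > 0 -> num >= L * D -> num / D >= L.
Proof.
  intros HD H. apply Rle_ge. apply (Rmult_le_reg_r D); auto. unfold Rdiv.
  rewrite Rmult_assoc, Rinv_l by lra. lra.
Qed.

Lemma caseA N r eps k1 k2 rho : eps > 0 ->
  (forall S i, length S = N -> (i < N)%nat -> -1 <= r S i <= 1) ->
  (forall i, (i < N)%nat -> r (singleton N i) i = 0) ->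
  (k1 < N)%nat -> (k2 < N)%nat -> k1 <> k2 -> r (singleton N k2) k1 <= 0 ->
  rho > 0 -> (forall j, (j < N)%nat -> j <> k1 -> r (singleton N k1) j >= rho) ->
  exists x : profile, stationary N x /\ eps_equilibrium N r eps x.
Proof.
  intros He hr hdiag H1 H2 H12 Hk21 Hrho Hk1.
  set (e := Rmin eps 1). assert (He1 : 0 < e <= 1 /\ e <= eps).
  { unfold e. unfold Rmin. destruct (Rle_dec eps 1); lra. }
  set (p := e / 2). assert (Hp : 0 < p <= 1/2) by (unfold p; lra).
  assert (Hpe : p <= eps) by (unfold p; lra).
  assert (Hpe2 : p <= eps / 2) by (unfold p; lra).
  set (eta := Rmin rho e / 4).
  assert (Heta : 0 < eta /\ eta <= rho / 4 /\ eta <= eps / 4 /\ eta <= 1/4).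
  { unfold eta, Rmin. destruct (Rle_dec rho e); lra. }
  set (q := p * eta).
  assert (Hq : 0 < q <= p / 4) by (unfold q; nra).
  assert (Hq2 : 2 * q <= p * eps / 2) by (unfold q; nra).
  assert (Hqr : q <= p * rho / 4) by (unfold q; nra).
  assert (HD1 : 1 - (1 - p) * (1 - q) >= p) by nra.
  assert (HD2 : 1 - (1 - q) * (1 - p) >= p) by nra.
  assert (HE1 : eps * (1 - (1 - p) * (1 - q)) >= eps * p) by (apply Rmult_ge_compat_l; lra).
  assert (HE2 : eps * (1 - (1 - q) * (1 - p)) >= eps * p) by (apply Rmult_ge_compat_l; lra).
  set (x := prof2 k1 k2 p q).
  assert (Hst : stationary N x) by (intros i t _; reflexivity).
  assert (Hpr : is_profile N x).
  { intros i _ t. unfold x, prof2. destruct (i =? k1); [lra|]. destruct (i =? k2); lra. }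
  assert (Hx1 : x k1 0%nat = p) by (unfold x, prof2; rewrite Nat.eqb_refl; reflexivity).
  assert (Hx2 : x k2 0%nat = q).
  { unfold x, prof2. rewrite Nat.eqb_refl. destruct (Nat.eqb_spec k2 k1); [congruence|reflexivity]. }
  exists x. split; auto. split; auto.
  intros i Hi.
  destruct (Nat.eq_dec i k1) as [->|Hik1]; [|destruct (Nat.eq_dec i k2) as [->|Hik2]].
  -
    assert (Ha : av N x k1 = 1 - q).
    { unfold av. rewrite (prod1 N _ k2 H2). destruct (Nat.eqb_spec k2 k1); [congruence|]. rewrite Hx2. ring.
      intros k Hk Hne. destruct (Nat.eqb_spec k k1); auto.
      unfold x, prof2. apply Nat.eqb_neq in n. apply Nat.eqb_neq in Hne. rewrite n, Hne. ring. }
    assert (HC : Cv N r x k1 = q * r (singleton N k2) k1).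
    { unfold Cv. rewrite (Eone N _ _ k2 q (setc (fun _ => false) k1 false)); auto.
      rewrite (Fi_single r k1 _ N k2 H2), (Fi_false r k1 _ N). ring. solve_c. solve_c.
      unfold x; solve_w2. unfold x; solve_w2. }
    assert (HQ : -q <= Qv N r x k1 <= q).
    { unfold Qv. rewrite (Eone N _ _ k2 q (setc (fun _ => false) k1 true)); auto.
      rewrite (Fi_single r k1 (setc (setc (fun _ => false) k1 true) k2 false) N k1 H1). rewrite hdiag by auto.
      pose proof (Fi_bound N r k1 (setc (setc (fun _ => false) k1 true) k2 true) hr H1). nra.
      solve_c. unfold x; solve_w2. unfold x; solve_w2. }
    set (W := r (singleton N k2) k1).
    assert (HWle : W <= 0) by exact Hk21.
    assert (HW : -1 <= W <= 1) by (apply hr; auto; apply length_mapc).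
    eapply (player_ok N r x k1 eps _ W Hst H1); auto.
    + rewrite HC, Ha. unfold W. ring.
    + rewrite Ha. lra.
    + rewrite Ha. left. lra.
    + apply actual_payoff; auto. rewrite Ha; lra. rewrite Ha, Hx1. nra.
    + rewrite Hx1, Ha, HC. fold W. apply divge. nra.
      assert (W - Qv N r x k1 >= -2) by lra.
      assert (0 <= (1 - p) * q <= q) by nra.
      assert ((1 - p) * q * (W - Qv N r x k1) >= -2 * q) by nra.
      nra.
    + rewrite Hx1, Ha, HC. fold W. apply divge. nra.
      assert (Hid : p * Qv N r x k1 + (1 - p) * (q * W) - (W - eps) * (1 - (1 - p) * (1 - q))
                    = p * (Qv N r x k1 - W) + eps * (1 - (1 - p) * (1 - q))) by ring.
      assert (Qv N r x k1 - W >= - q) by lra.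
      assert (p * (Qv N r x k1 - W) >= - p * q) by nra.
      assert (eps * p >= p * q) by nra. lra.
  -
    assert (Ha : av N x k2 = 1 - p).
    { unfold av. rewrite (prod1 N _ k1 H1). destruct (Nat.eqb_spec k1 k2); [congruence|]. rewrite Hx1. ring.
      intros k Hk Hne. destruct (Nat.eqb_spec k k2); auto.
      unfold x, prof2. apply Nat.eqb_neq in n. apply Nat.eqb_neq in Hne. rewrite n, Hne. ring. }
    assert (HC : Cv N r x k2 = p * r (singleton N k1) k2).
    { unfold Cv. rewrite (Eone N _ _ k1 p (setc (fun _ => false) k2 false)); auto.
      rewrite (Fi_single r k2 _ N k1 H1), (Fi_false r k2 _ N). ring. solve_c. solve_c.
      unfold x; solve_w2. unfold x; solve_w2. }
    assert (HQ : -p <= Qv N r x k2 <= p).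
    { unfold Qv. rewrite (Eone N _ _ k1 p (setc (fun _ => false) k2 true)); auto.
      rewrite (Fi_single r k2 (setc (setc (fun _ => false) k2 true) k1 false) N k2 H2). rewrite hdiag by auto.
      pose proof (Fi_bound N r k2 (setc (setc (fun _ => false) k2 true) k1 true) hr H2). nra.
      solve_c. unfold x; solve_w2. unfold x; solve_w2. }
    set (W := r (singleton N k1) k2).
    assert (HW : -1 <= W <= 1) by (apply hr; auto; apply length_mapc).
    assert (HWr : W >= rho) by (apply Hk1; auto).
    eapply (player_ok N r x k2 eps _ W Hst H2); auto.
    + rewrite HC, Ha. unfold W. ring.
    + rewrite Ha. lra.
    + rewrite Ha. left. lra.
    + apply actual_payoff; auto. rewrite Ha; lra. rewrite Ha, Hx2. nra.
    + rewrite Hx2, Ha, HC. fold W. apply divge. nra.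
      assert (W - Qv N r x k2 >= - p) by lra.
      assert (0 <= (1 - q) * p <= p) by nra.
      assert ((1 - q) * p * (W - Qv N r x k2) >= - p * p) by nra.
      nra.
    + rewrite Hx2, Ha, HC. fold W. apply divge. nra.
      assert (Qv N r x k2 - W >= -2) by lra.
      assert (q * (Qv N r x k2 - W) >= -2 * q) by nra.
      nra.
  -
    assert (Hxi : x i 0%nat = 0).
    { unfold x, prof2. apply Nat.eqb_neq in Hik1. apply Nat.eqb_neq in Hik2. rewrite Hik1, Hik2. reflexivity. }
    assert (Ha : av N x i = (1 - p) * (1 - q)).
    { unfold av. rewrite (prod2 N _ k1 k2 H1 H2 H12).
      destruct (Nat.eqb_spec k1 i); [congruence|]. destruct (Nat.eqb_spec k2 i); [congruence|].
      rewrite Hx1, Hx2. ring.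
      intros k Hk Hne1 Hne2. destruct (Nat.eqb_spec k i); auto.
      unfold x, prof2. apply Nat.eqb_neq in Hne1. apply Nat.eqb_neq in Hne2. rewrite Hne1, Hne2. ring. }
    assert (HC : Cv N r x i >= p * (1 - q) * rho - q).
    { unfold Cv. rewrite (Etwo N _ _ k1 k2 p q (setc (fun _ => false) i false)); auto.
      rewrite (Fi_single r i (setc (setc (setc (fun _ => false) i false) k1 true) k2 false) N k1 H1).
      rewrite (Fi_false r i (setc (setc (setc (fun _ => false) i false) k1 false) k2 false) N).
      pose proof (Fi_bound N r i (setc (setc (setc (fun _ => false) i false) k1 true) k2 true) hr Hi) as B1.
      pose proof (Fi_bound N r i (setc (setc (setc (fun _ => false) i false) k1 false) k2 true) hr Hi) as B3.
      set (a1 := Fi r i (map (setc (setc (setc (fun _ => false) i false) k1 true) k2 true) (seq 0 N))) in *.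
      set (a3 := Fi r i (map (setc (setc (setc (fun _ => false) i false) k1 false) k2 true) (seq 0 N))) in *.
      assert (r (singleton N k1) i >= rho) by (apply Hk1; auto).
      assert (p * (1 - q) * r (singleton N k1) i >= p * (1 - q) * rho) by (apply Rmult_ge_compat_l; nra).
      assert (p * q * a1 >= -(p * q)) by (assert (0 <= p * q) by nra; nra).
      assert ((1 - p) * q * a3 >= -((1 - p) * q)) by (assert (0 <= (1 - p) * q) by nra; nra).
      lra.
      solve_c. solve_c.
      unfold x; solve_w2. unfold x; solve_w2. unfold x; solve_w2. }
    assert (HQ : Qv N r x i <= p + q).
    { unfold Qv. rewrite (Etwo N _ _ k1 k2 p q (setc (fun _ => false) i true)); auto.
      rewrite (Fi_single r i (setc (setc (setc (fun _ => false) i true) k1 false) k2 false) N i Hi).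
      rewrite hdiag by auto.
      pose proof (Fi_bound N r i (setc (setc (setc (fun _ => false) i true) k1 true) k2 true) hr Hi) as B1.
      pose proof (Fi_bound N r i (setc (setc (setc (fun _ => false) i true) k1 true) k2 false) hr Hi) as B2.
      pose proof (Fi_bound N r i (setc (setc (setc (fun _ => false) i true) k1 false) k2 true) hr Hi) as B3.
      set (a1 := Fi r i (map (setc (setc (setc (fun _ => false) i true) k1 true) k2 true) (seq 0 N))) in *.
      set (a2 := Fi r i (map (setc (setc (setc (fun _ => false) i true) k1 true) k2 false) (seq 0 N))) in *.
      set (a3 := Fi r i (map (setc (setc (setc (fun _ => false) i true) k1 false) k2 true) (seq 0 N))) in *.
      assert (p * q * a1 <= p * q) by (assert (0 <= p * q) by nra; nra).
      assert (p * (1 - q) * a2 <= p * (1 - q)) by (assert (0 <= p * (1 - q)) by nra; nra).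
      assert ((1 - p) * q * a3 <= (1 - p) * q) by (assert (0 <= (1 - p) * q) by nra; nra).
      nra.
      solve_c.
      unfold x; solve_w2. unfold x; solve_w2. unfold x; solve_w2. }
    assert (Hden : 1 - av N x i > 0) by (rewrite Ha; nra).
    set (W := Cv N r x i / (1 - av N x i)).
    assert (HW0 : W >= 0).
    { unfold W. apply divge; auto. nra. }
    eapply (player_ok N r x i eps _ W Hst Hi); auto.
    + unfold W. field. lra.
    + rewrite Ha. nra.
    + rewrite Ha. left. nra.
    + apply actual_payoff; auto. rewrite Ha; nra. rewrite Ha, Hxi. nra.
    + rewrite Hxi. replace ((0 * Qv N r x i + (1 - 0) * Cv N r x i) / (1 - (1 - 0) * av N x i)) with W
        by (unfold W; field; lra). lra.
    + rewrite Hxi. replace ((0 * Qv N r x i + (1 - 0) * Cv N r x i) / (1 - (1 - 0) * av N x i)) with W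
        by (unfold W; field; lra). lra.
Qed.


Lemma in_I_mono N r l l' i : (l <= l')%nat -> in_I N r l' i -> in_I N r l i.
Proof. intro H. induction H; auto. intro H'. apply IHle. destruct H' as [H' _]. exact H'. Qed.

Lemma removal N r i : (i < N)%nat -> ~ normal N r i -> exists l, in_I N r l i /\ ~ in_I N r (S l) i.
Proof.
  intros Hi Hn. unfold normal in Hn. apply not_all_ex_not in Hn. destruct Hn as [L HL].
  induction L. exfalso. apply HL. exact Hi.
  destruct (classic (in_I N r L i)). exists L. auto. apply IHL. auto.
Qed.

Definition Rk N r i l := in_I N r l i /\ ~ in_I N r (S l) i.

Lemma Rk_fun N r i l l' : Rk N r i l -> Rk N r i l' -> l = l'.
Proof.
  intros [H1 H2] [H3 H4]. destruct (Nat.lt_trichotomy l l') as [Hlt|[Heq|Hgt]]; auto.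
  - exfalso. apply H2. apply (in_I_mono N r (S l) l'); auto.
  - exfalso. apply H4. apply (in_I_mono N r (S l') l); auto.
Qed.

Lemma edge_rank N r i j l l' : Rk N r i l -> (j < N)%nat -> j <> i -> r (singleton N j) i <= 0 ->
  Rk N r j l' -> (l' < l)%nat.
Proof.
  intros [H1 H2] Hj Hji Hr [H3 H4]. destruct (Nat.lt_ge_cases l' l) as [|Hge]; auto.
  exfalso. apply H2. split; auto. exists j. split; auto. apply (in_I_mono N r l l'); auto.
Qed.

Lemma argmax (P : nat -> Prop) (f : nat -> nat -> Prop) N :
  (forall i, (i < N)%nat -> P i -> exists l, f i l) ->
  (forall i l l', f i l -> f i l' -> l = l') ->
  (exists i, (i < N)%nat /\ P i) ->
  exists i l, (i < N)%nat /\ P i /\ f i l /\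
    forall j l', (j < N)%nat -> P j -> f j l' -> (l' <= l)%nat.
Proof.
  intros Hex Hfun. induction N; intros [i0 [Hi0 HP0]]. lia.
  destruct (classic (exists i, (i < N)%nat /\ P i)) as [HN|HN].
  - destruct IHN as [i [l [Hi [HPi [Hfi Hmax]]]]]; auto.
    destruct (classic (P N)) as [HPN|HPN].
    + destruct (Hex N) as [lN HlN]; auto.
      destruct (Nat.le_gt_cases lN l).
      * exists i, l. repeat split; auto. intros j l' Hj HPj Hfj.
        destruct (Nat.eq_dec j N). subst. rewrite (Hfun N l' lN); auto. apply (Hmax j l'); auto. lia.
      * exists N, lN. repeat split; auto. intros j l' Hj HPj Hfj.
        destruct (Nat.eq_dec j N). subst. rewrite (Hfun N l' lN); auto.
        assert (l' <= l)%nat by (apply (Hmax j l'); auto; lia). lia.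
    + exists i, l. repeat split; auto. intros j l' Hj HPj Hfj.
      destruct (Nat.eq_dec j N). subst. contradiction. apply (Hmax j l'); auto. lia.
  - assert (i0 = N). { destruct (Nat.eq_dec i0 N); auto. exfalso. apply HN. exists i0. split; auto. lia. }
    subst. destruct (Hex N) as [lN HlN]; auto.
    exists N, lN. repeat split; auto. intros j l' Hj HPj Hfj.
    destruct (Nat.eq_dec j N). subst. rewrite (Hfun N l' lN); auto.
    exfalso. apply HN. exists j. split; auto. lia.
Qed.

Lemma finite_min (f : nat -> R) (P : nat -> Prop) N :
  (forall j, (j < N)%nat -> P j -> f j > 0) ->
  exists m, m > 0 /\ forall j, (j < N)%nat -> P j -> f j >= m.
Proof.
  induction N; intro H.
  - exists 1. split. lra. intros. lia.
  - destruct IHN as [m [Hm Hmin]]. intros; apply H; auto.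
    destruct (classic (P N)) as [HP|HP].
    + exists (Rmin m (f N)). split. { assert (f N > 0) by (apply H; auto). unfold Rmin; destruct (Rle_dec m (f N)); lra. }
      intros j Hj HPj. destruct (Nat.eq_dec j N). subst. apply Rle_ge, Rmin_r.
      assert (f j >= m) by (apply Hmin; auto; lia). assert (Rmin m (f N) <= m) by apply Rmin_l. lra.
    + exists m. split; auto. intros j Hj HPj. destruct (Nat.eq_dec j N). subst. contradiction.
      apply Hmin; auto; lia.
Qed.

Theorem lemma2 (N : nat) (r : payoffs)
  (hr : forall S i, length S = N -> (i < N)%nat -> -1 <= r S i <= 1)
  (hdiag : forall i, (i < N)%nat -> r (singleton N i) i = 0)
  (habn : forall i, (i < N)%nat -> ~ normal N r i) :
  forall eps : R, eps > 0 ->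
    exists x : profile, stationary N x /\ eps_equilibrium N r eps x.
Proof.
  intros eps He.
  set (P := fun i => exists k2, (k2 < N)%nat /\ k2 <> i /\ r (singleton N k2) i <= 0).
  destruct (classic (exists i, (i < N)%nat /\ P i)) as [Hex|Hno].
  - destruct (argmax P (Rk N r) N) as [k1 [l1 [Hk1 [HP1 [HR1 Hmax]]]]]; auto.
    + intros i Hi _. apply removal; auto.
    + intros i l l'. apply Rk_fun.
    + destruct HP1 as [k2 [Hk2 [H21 Hr21]]].
      assert (Hsink : forall j, (j < N)%nat -> j <> k1 -> r (singleton N k1) j > 0).
      { intros j Hj Hjk. destruct (Rle_lt_dec (r (singleton N k1) j) 0) as [Hle|]; auto.
        exfalso. destruct (removal N r j Hj (habn j Hj)) as [lj Hlj].
        assert (lj <= l1)%nat. { apply (Hmax j lj); auto. exists k1. auto. }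
        assert (l1 < lj)%nat by (apply (edge_rank N r j k1 lj l1); auto).
        lia. }
      destruct (finite_min (fun j => r (singleton N k1) j) (fun j => j <> k1) N) as [rho [Hrho Hmin]].
      { intros; apply Hsink; auto. }
      apply (caseA N r eps k1 k2 rho); auto.
  - assert (Hedge : forall i j, (i < N)%nat -> (j < N)%nat -> j <> i -> r (singleton N j) i > 0).
    { intros i j Hi Hj Hji. destruct (Rle_lt_dec (r (singleton N j) i) 0); auto.
      exfalso. apply Hno. exists i. split; auto. exists j. auto. }
    destruct (classic (exists k, (k < N)%nat /\ r (empty_set N) k <= 0)) as [[k [Hk Hk0]]|Hn].
    + apply (caseB1 N r eps k); auto.
    + apply caseB2; auto. intros i Hi. destruct (Rle_lt_dec (r (empty_set N) i) 0); auto.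
      exfalso. apply Hn. exists i. auto.
Qed.
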